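(* Let $N\ge 1$ and let $A=(A_1,\dots,A_{2N})\in(\mathbb{R}_{>0})^{2N}$ satisfy $\sum_{l=1}^N A_{2l}<\sum_{l=1}^N A_{2l-1}$ and the highest weight condition. Run Algorithm I on $x^{(1)}=A$, producing $u\ge1$ and pairs $(\mu^{(i)},\nu^{(i)})_{1\le i\le u}$, and put $\lambda^{(i)}=\sum_{l=1}^{i}\mu^{(l)}$. Let $\ell_1\le\ell_2\le\cdots\le\ell_N$ be the list consisting of $\lambda^{(1)}$ repeated $\nu^{(1)}$ times, followed by $\lambda^{(2)}$ repeated $\nu^{(2)}$ times, ..., followed by $\lambda^{(u)}$ repeated $\nu^{(u)}$ times (this list has exactly $N$ terms). Then for every $1\le k\le N$, $$\sum_{j=1}^{k}\ell_j=\min_{\substack{1\le i_1\triangleleft i_2\triangleleft\cdots\triangleleft i_k\le 2N\\ (i_1,i_k)\neq(1,2N)}}\big(A_{i_1}+A_{i_2}+\cdots+A_{i_k}\big)=:H_k.$$ (Equivalently: the Young diagram with $\nu^{(i)}$ rows of length $\lambda^{(i)}$ has, below height $k$ from its bottom, area $H_k$, the $k$th conserved quantity of the tropical periodic Toda lattice.)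
   Context: For integers $i,j$, $i\triangleleft j$ means $i+1<j$; the minimum runs over index tuples $1\le i_1<\dots<i_k\le 2N$ with consecutive indices differing by at least $2$, excluding tuples with $i_1=1$ and $i_k=2N$ simultaneously. Highest weight condition: a sequence $x_1,\dots,x_{2n}$ of nonnegative reals satisfies it if $\sum_{i=1}^k(x_{2i-1}-x_{2i})\ge0$ for all $1\le k\le n$. Algorithm I. Set $N^{(1)}=N$, $x^{(1)}=A$. Given $x^{(i)}=(x^{(i)}_1,\dots,x^{(i)}_{2N^{(i)}})$ of positive reals satisfying the highest weight condition: let $\mu^{(i)}=\min_j x^{(i)}_j$ and $y^{(i)}_j=x^{(i)}_j-\mu^{(i)}$. In the (linear, non-cyclic) array $y^{(i)}_1,\dots,y^{(i)}_{2N^{(i)}}$ consider the maximal runs of consecutive zeros (a lone zero counts as a run); say there are $k^{(i)}$ runs with lengths $n^{(i)}_1,\dots,n^{(i)}_{k^{(i)}}$ (from left to right). Let $N^{(i+1)}=N^{(i)}-\sum_{j}\lceil n^{(i)}_j/2\rceil$ and $\nu^{(i)}=N^{(i)}-N^{(i+1)}$. If $N^{(i+1)}=0$, stop and set $u=i$. Otherwise form $x^{(i+1)}$ from $y^{(i)}$ as follows: (a) if a run of zeros is at the left end of the array, delete it (its length is even); (b) for every run of zeros lying between positive entries $a,b$ (as $\dots,a,0,\dots,0,b,\dots$), delete the zeros if the run length is even, and if it is odd delete the zeros and also replace $a,b$ by the single entry $a+b$; (c) if a run of zeros is at the right end, preceded by a positive entry $a$, delete the zeros, and if its length is odd also delete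 $a$ and add $a$ to the first entry of the resulting array. The result is an array $x^{(i+1)}$ of $2N^{(i+1)}$ positive reals satisfying the highest weight condition; repeat. *)

(* Defs.v *)
From HB Require Import structures.
From mathcomp Require Import all_boot all_order all_algebra.
Set Implicit Arguments. Unset Strict Implicit. Unset Printing Implicit Defensive.
Import Order.TTheory GRing.Theory Num.Theory.
Local Open Scope ring_scope.

Section Toda.
Variable R : realFieldType.

(* 1-based access: ent x i = x_i *)
Definition ent (x : seq R) (i : nat) : R := nth 0 x i.-1.

Definition seqmin (x : seq R) : R := foldr Order.min (head 0 x) x.

(* Decompose y as  0^z0, p_1, 0^z_1, p_2, 0^z_2, ..., p_m, 0^z_m
   with p_j <> 0; returns (z0, [:: (p_1,z_1); ...; (p_m,z_m)]). *)
Definition blocks (y : seq R) : nat * seq (R * nat) :=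
  foldr (fun a acc => if a == 0 then (acc.1.+1, acc.2)
                      else (0%N, (a, acc.1) :: acc.2)) (0%N, [::]) y.

Definition nu_of (y : seq R) : nat :=
  (uphalf (blocks y).1 + \sum_(p <- (blocks y).2) uphalf p.2)%N.

(* rule (b): merge chains of positive entries separated by odd zero runs *)
Fixpoint grp (ps : seq (R * nat)) : seq R :=
  match ps with
  | [::] => [::]
  | (a, z) :: ps' =>
      match grp ps' with
      | g :: rest => if odd z then (a + g) :: rest else a :: g :: rest
      | [::] => [:: a]
      end
  end.

(* one step of Algorithm I on y (already shifted by -mu):
   (a) leading zeros deleted, (b) internal runs, (c) trailing run *)
Definition next_arr (y : seq R) : seq R :=
  let ps := (blocks y).2 in
  let vs := grp ps in
  let trailing_odd := if ps is [::] then false else odd (last (0, 0%N) ps).2 in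
  if trailing_odd then
    match take (size vs).-1 vs with
    | [::] => [::]
    | v :: r => (v + last 0 vs) :: r
    end
  else vs.

(* Algorithm I: returns the list of pairs (mu^(i), nu^(i)), i = 1..u.
   fuel bounds the number of iterations (N suffices since nu^(i) >= 1). *)
Fixpoint algoI (fuel M : nat) (x : seq R) : seq (R * nat) :=
  match fuel with
  | 0%N => [::]
  | f.+1 =>
      let mu := seqmin x in
      let y := [seq a - mu | a <- x] in
      let nu := nu_of y in
      let M' := (M - nu)%N in
      if M' == 0%N then [:: (mu, nu)]
      else (mu, nu) :: algoI f M' (next_arr y)
  end.

Fixpoint ells (acc : R) (ps : seq (R * nat)) : seq R :=
  match ps with
  | [::] => [::]
  | (mu, nu) :: ps' => nseq nu (acc + mu) ++ ells (acc + mu) ps'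
  end.

Definition ell_list (N : nat) (A : seq R) : seq R := ells 0 (algoI N N A).

Definition admissible (N k : nat) (t : seq nat) : bool :=
  [&& size t == k,
      all (fun i => (1 <= i <= 2 * N)%N) t,
      sorted (fun i j => (i.+1 < j)%N) t
    & ~~ ((head 0%N t == 1%N) && (last 0%N t == 2 * N)%N)].

Definition tuple_sum (A : seq R) (t : seq nat) : R := \sum_(i <- t) ent A i.

Definition highest_weight (n : nat) (x : seq R) : Prop :=
  forall k, (1 <= k <= n)%N ->
    0 <= \sum_(1 <= i < k.+1) (ent x (2 * i).-1 - ent x (2 * i)).

End Toda.

(* Main.v *)
Require Import Defs.
From HB Require Import structures.
From mathcomp Require Import all_boot all_order all_algebra zify ring.
Set Implicit Arguments. Unset Strict Implicit. Unset Printing Implicit Defensive.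
Import Order.TTheory GRing.Theory Num.Theory.
Local Open Scope ring_scope.

Definition nadj (a b : bool) : bool := ~~ (a && b).

Lemma path_nadj_false c s : path nadj c s -> path nadj false s.
Proof. by case: s => //= y s /andP[_ ->]. Qed.

Lemma cycle_nadjE m :
  cycle nadj m = sorted nadj m && ~~ (head false m && last false m).
Proof.
case: m => //= b m; rewrite rcons_path /nadj; by case: b; case: (last _ m).
Qed.

Lemma cycle_cons b s : cycle nadj (b :: s) = path nadj b s && nadj (last b s) b.
Proof. by rewrite /= rcons_path. Qed.

Lemma cycle_nseq n : cycle nadj (nseq n false).
Proof.
rewrite cycle_nadjE; case: n => //= n; rewrite andbT.
by elim: n => //= n ->.
Qed.

Section Masks.
Variable R : realFieldType.
Local Open Scope ring_scope.
Implicit Types (x y w : seq R) (m : bitseq).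

Definition wsum x m : R := \sum_(a <- mask m x) a.
Definition nonneg x := all (fun a : R => 0 <= a) x.

Lemma wsum_nil m : wsum [::] m = 0.
Proof. by rewrite /wsum mask0 big_nil. Qed.

Lemma wsumT a x m : wsum (a :: x) (true :: m) = a + wsum x m.
Proof. by rewrite /wsum /= big_cons. Qed.

Lemma wsumF a x m : wsum (a :: x) (false :: m) = wsum x m.
Proof. by []. Qed.

Lemma wsum_ge0 x m : nonneg x -> 0 <= wsum x m.
Proof.
move=> /allP H; rewrite /wsum big_seq; apply: sumr_ge0 => i /mem_mask; exact: H.
Qed.

Definition isHm x k v :=
  (exists2 m, [/\ size m = size x, cycle nadj m & count id m = k] & wsum x m = v) /\
  (forall m, size m = size x -> cycle nadj m -> (k <= count id m)%N -> v <= wsum x m).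

Lemma isHm0 x : nonneg x -> isHm x 0 0.
Proof.
move=> hx; split.
  exists (nseq (size x) false); first by rewrite size_nseq cycle_nseq count_nseq mul0n.
  by rewrite /wsum mask_false big_nil.
move=> m _ _ _; exact: wsum_ge0.
Qed.

Lemma isHm_rot i x k v : isHm x k v -> isHm (rot i x) k v.
Proof.
have cnt : forall m, count id (rot i m) = count id m.
  by move=> m; apply/permP; rewrite perm_rot.
have ws : forall m x, size m = size x -> wsum (rot i x) (rot i m) = wsum x m.
  by move=> m x0 sz; rewrite /wsum mask_rot //; apply: perm_big; rewrite perm_rot.
case=> [[m [sz cy ct] ws0] lb]; split.
  exists (rot i m); first by rewrite !size_rot rot_cycle cnt.
  by rewrite ws.
move=> m1 sz1 cy1 ct1; rewrite -(rotrK i m1) ws; last by rewrite size_rotr sz1 size_rot.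
apply: lb; first by rewrite size_rotr sz1 size_rot.
  by rewrite -(rot_cycle i) rotrK.
by rewrite -cnt rotrK.
Qed.

Lemma isHm_unrot i x k v : isHm (rot i x) k v -> isHm x k v.
Proof.
move=> H; have := isHm_rot (size (rot i x) - i) H.
by rewrite -/(rotr i (rot i x)) rotK.
Qed.

End Masks.

Lemma cycle_path_false m : cycle nadj m -> path nadj false m.
Proof. by case: m => //= h t; rewrite rcons_path => /andP[]. Qed.

Lemma sorted_path_false m : sorted nadj m = path nadj false m.
Proof. by case: m. Qed.

Section Front.
Variable R : realFieldType.
Local Open Scope ring_scope.
Implicit Types (x y w : seq R) (m : bitseq).

Lemma wsum0 x c m : wsum (0 :: x) (c :: m) = wsum x m.
Proof. by case: c; rewrite ?wsumT ?wsumF ?add0r. Qed.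

Lemma isHm_lift x y k v :
  (forall m, size m = size y -> cycle nadj m ->
     exists m3, [/\ size m3 = size x, cycle nadj m3,
       ((count id m).-1 <= count id m3)%N & wsum x m3 <= wsum y m]) ->
  (forall m, size m = size x -> cycle nadj m -> (k <= count id m)%N -> v <= wsum x m) ->
  forall m, size m = size y -> cycle nadj m -> (k.+1 <= count id m)%N -> v <= wsum y m.
Proof.
move=> H lb m sz cy ct; have [m3 [s3 c3 n3 w3]] := H m sz cy.
apply: le_trans w3; apply: lb => //; apply: leq_trans n3.
by rewrite -ltnS; case: (count id m) ct.
Qed.

Lemma FL1 w k v : nonneg w -> isHm w k v -> isHm [:: 0, 0 & w] k.+1 v.
Proof.
move=> nw [[m [sz cy ct] ws] lb]; split.
  exists (if last false m then [:: false, true & m] else [:: true, false & m]).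
    case E: (last false m); (split; first by rewrite /= sz); last by rewrite /= ct.
    - rewrite cycle_cons /= /nadj /=.
      case: m E cy {sz ct ws} => //= h t E; rewrite rcons_path E /nadj andbT => /andP[-> /=].
      by case: h {E}.
    - by rewrite /= ct.
    - by rewrite cycle_cons /= E andbT; apply: cycle_path_false.
  by case: (last false m); rewrite !wsum0.
apply: isHm_lift lb => -[|c1 [|c2 m']] // sz0 cy'; move: sz0 => /= [sz'].
move: cy'; rewrite cycle_nadjE /= => /andP[/andP[n12 pm] hl].
rewrite !wsum0.
case: c1 c2 n12 hl pm => -[] //= _ hl pm.
- exists m'; split => //; rewrite cycle_nadjE sorted_path_false pm /=.
  by move: hl; case: (last false m'); rewrite ?andbF.
- exists m'; split => //; rewrite cycle_nadjE sorted_path_false.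
  case: m' pm {hl sz'} => //= h t /andP[nh ->]; by case: h nh.
- case E: (head false m' && last false m').
    case: m' E pm sz' {hl} => //= h t /andP[-> _] pt.
    case: w nw {sz ws} => //= a w /andP[a0 nw] [szt].
    exists (false :: t); split => //; first by rewrite /= szt.
    + rewrite cycle_nadjE /= andbT; exact: path_nadj_false pt.
    + by rewrite wsumT wsumF ler_wpDl.
  exists m'; split => //; first by rewrite cycle_nadjE sorted_path_false pm E.
  exact: leq_pred.
Qed.

Lemma FL2 a b w k v : 0 <= a -> 0 <= b ->
  isHm ((a + b) :: w) k v -> isHm [:: a, 0, b & w] k.+1 v.
Proof.
move=> a0 b0 [[[|c m] [sz cy ct] ws] lb] //; split.
  exists (if c then [:: true, false, true & m] else [:: false, true, false & m]).
    move: sz => /= [sz]; move: cy ct; case: c {ws} => cy ct; (split=> //; first by rewrite /= sz).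
    - by rewrite /= -ct.
    - by rewrite /= -ct.
  case: c ws {sz cy ct} => <-; first by rewrite wsumT wsumF wsumT wsumT addrA.
  by rewrite wsumF wsumT wsumF wsumF add0r.
apply: isHm_lift lb => -[|c1 [|c2 [|c3 m']]] // sz0 cy'; move: sz0 => /= [sz'].
move: cy'; rewrite cycle_nadjE /= => /andP[/andP[n12 /andP[n23 pm]] hl].
case: c2 n12 n23 => /= n12 n23.
  case: c1 c3 n12 n23 hl pm => -[] // _ _ _ pm.
  exists (false :: m'); split => //; first by rewrite /= sz'.
    by rewrite cycle_nadjE /= andbT; exact: path_nadj_false pm.
  by rewrite !wsumF wsumT add0r.
move: c1 c3 n12 n23 hl pm => [] [] _ _ hl pm.
- exists (true :: m'); split => //; first by rewrite /= sz'.
    by rewrite cycle_nadjE /= pm.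
  by rewrite wsumT wsumT wsumF wsumT addrA.
- exists (false :: m'); split => //; first by rewrite /= sz'.
    by rewrite cycle_nadjE /= andbT; exact: path_nadj_false pm.
  by rewrite wsumT !wsumF ler_wpDl.
- exists (false :: m'); split => //; first by rewrite /= sz'.
    by rewrite cycle_nadjE /= andbT; exact: path_nadj_false pm.
  by rewrite !wsumF wsumT ler_wpDl.
- exists (false :: m'); split => //; first by rewrite /= sz'.
    by rewrite cycle_nadjE /= andbT; exact: path_nadj_false pm.
  by rewrite /= leq_pred.
Qed.

Lemma FE (a : R) k v : 0 <= a -> isHm ([::] : seq R) k v -> isHm [:: a; 0] k.+1 v.
Proof.
move=> a0 [[m [sz _ ct] ws] _]; case: m sz ct ws => // _ <- <-; split.
  by exists [:: false; true] => //; rewrite wsumF wsumT wsum_nil addr0.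
move=> m _ _ _; rewrite wsum_nil; apply: wsum_ge0; by rewrite /nonneg /= a0 lexx.
Qed.
End Front.

Section Red.
Variable R : realFieldType.
Local Open Scope ring_scope.
Implicit Types (x y w u z : seq R) (m : bitseq).

Lemma nonneg_cat x y : nonneg (x ++ y) = nonneg x && nonneg y.
Proof. exact: all_cat. Qed.

Lemma PL1 u w k v : nonneg (u ++ [:: 0, 0 & w]) ->
  isHm (u ++ w) k v -> isHm (u ++ [:: 0, 0 & w]) k.+1 v.
Proof.
move=> nn H; apply: (@isHm_unrot _ (size u)); rewrite rot_size_cat.
have := @isHm_rot _ (size u) _ _ _ H; rewrite rot_size_cat => H'.
apply: FL1 => //; move: nn; rewrite !nonneg_cat /nonneg /= => /andP[-> /andP[_ /andP[_ ->]]].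
done.
Qed.

Lemma PL2 u a b w k v : nonneg (u ++ [:: a, 0, b & w]) ->
  isHm (u ++ (a + b) :: w) k v -> isHm (u ++ [:: a, 0, b & w]) k.+1 v.
Proof.
move=> nn H; apply: (@isHm_unrot _ (size u)); rewrite rot_size_cat.
have := @isHm_rot _ (size u) _ _ _ H; rewrite rot_size_cat => H'.
move: nn; rewrite nonneg_cat /nonneg /= => /andP[nu /and4P[a0 _ b0 nw]].
by apply: FL2.
Qed.

Lemma PT (a : R) mid (l : R) k v : nonneg (a :: mid ++ [:: l; 0]) ->
  isHm ((a + l) :: mid) k v -> isHm (a :: mid ++ [:: l; 0]) k.+1 v.
Proof.
move=> nn H; apply: (@isHm_unrot _ (size (a :: mid))).
rewrite -cat_cons rot_size_cat /=.
move: nn; rewrite -cat_cons nonneg_cat /nonneg /= => /andP[/andP[a0 nm] /and3P[l0 _ _]].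
by apply: FL2 => //; rewrite addrC.
Qed.

Inductive rd : seq R -> seq R -> nat -> Prop :=
| rd0 s : rd s s 0
| rdL1 u w z d : rd (u ++ w) z d -> rd (u ++ [:: 0, 0 & w]) z d.+1
| rdL2 u a b w z d : rd (u ++ (a + b) :: w) z d -> rd (u ++ [:: a, 0, b & w]) z d.+1
| rdT a mid l z d : rd ((a + l) :: mid) z d -> rd (a :: mid ++ [:: l; 0]) z d.+1
| rdE a z d : rd [::] z d -> rd [:: a; 0] z d.+1.

Lemma rd_trans x y z d1 d2 : rd x y d1 -> rd y z d2 -> rd x z (d1 + d2).
Proof.
elim=> {x y d1} [s|u w y d _ IH|u a b w y d _ IH|a mid l y d _ IH|a y d _ IH] H //.
- by apply: rdL1; apply: IH.
- by apply: rdL2; apply: IH.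
- by apply: rdT; apply: IH.
- by apply: rdE; apply: IH.
Qed.

Lemma rd_nonneg y z d : rd y z d -> nonneg y -> nonneg z.
Proof.
elim=> {y z d} // [u w z d _ IH|u a b w z d _ IH|a mid l z d _ IH|a z d _ IH] nn;
  apply: IH.
- by move: nn; rewrite !nonneg_cat /nonneg /= => /andP[-> /and3P[_ _ ->]].
- move: nn; rewrite !nonneg_cat /nonneg /= => /andP[-> /and4P[a0 _ b0 ->]].
  by rewrite addr_ge0.
- move: nn; rewrite /nonneg /= all_cat /= => /and3P[a0 -> /and3P[l0 _ _]].
  by rewrite addr_ge0.
- by [].
Qed.

Lemma rd_size y z d : rd y z d -> size y = (size z + d.*2)%N.
Proof.
elim=> {y z d} [s|u w z d _ IH|u a b w z d _ IH|a mid l z d _ IH|a z d _ IH].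
- by rewrite addn0.
- by move: IH; rewrite !size_cat /= !doubleS; lia.
- by move: IH; rewrite !size_cat /= !doubleS; lia.
- by move: IH; rewrite /= !size_cat /= !doubleS; lia.
- by move: IH => /=; rewrite doubleS; lia.
Qed.

Lemma rd_transfer y z d : rd y z d -> nonneg y ->
  forall j v, isHm z j v -> isHm y (j + d) v.
Proof.
elim=> {y z d} [s|u w z d _ IH|u a b w z d _ IH|a mid l z d _ IH|a z d _ IH] nn j v H.
- by rewrite addn0.
- rewrite addnS; apply: PL1 => //; apply: IH => //.
  by move: nn; rewrite !nonneg_cat /nonneg /= => /andP[-> /and3P[_ _ ->]].
- rewrite addnS; apply: PL2 => //; apply: IH => //.
  move: nn; rewrite !nonneg_cat /nonneg /= => /andP[-> /and4P[a0 _ b0 ->]].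
  by rewrite addr_ge0.
- rewrite addnS; apply: PT => //; apply: IH => //.
  move: nn; rewrite /nonneg /= all_cat /= => /and3P[a0 -> /and3P[l0 _ _]].
  by rewrite addr_ge0.
- rewrite addnS; apply: FE; first by move: nn => /andP[].
  exact: IH.
Qed.

Lemma rd_prefix y z d : rd y z d -> nonneg y -> forall k, (k <= d)%N -> isHm y k 0.
Proof.
move=> H nn k; elim: H nn k => {y z d} [s|u w z d _ IH|u a b w z d _ IH|a mid l z d _ IH|a z d _ IH] nn
  [|k] kd; try exact: isHm0.
- by [].
- apply: PL1 => //; apply: IH => //.
  by move: nn; rewrite !nonneg_cat /nonneg /= => /andP[-> /and3P[_ _ ->]].
- apply: PL2 => //; apply: IH => //.
  move: nn; rewrite !nonneg_cat /nonneg /= => /andP[-> /and4P[a0 _ b0 ->]].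
  by rewrite addr_ge0.
- apply: PT => //; apply: IH => //.
  move: nn; rewrite /nonneg /= all_cat /= => /and3P[a0 -> /and3P[l0 _ _]].
  by rewrite addr_ge0.
- apply: FE; first by move: nn => /andP[].
  exact: IH.
Qed.

End Red.

Section Alt.
Variable R : realFieldType.
Local Open Scope ring_scope.
Implicit Types (x y w u z s t : seq R).

Fixpoint altsum s : R := if s is a :: s' then a - altsum s' else 0.

Definition ehw s := forall j, (j <= size s)%N -> ~~ odd j -> 0 <= altsum (take j s).

Lemma altsum_cat s t : altsum (s ++ t) = altsum s + (-1) ^+ size s * altsum t.
Proof.
elim: s => [|a s IH] /=; first by rewrite expr0 mul1r add0r.
by rewrite IH exprS; ring.
Qed.

Lemma altsum00 s : altsum [:: 0, 0 & s] = altsum s.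
Proof. by rewrite /=; ring. Qed.

Lemma altsum_a0b a b s : altsum [:: a, 0, b & s] = altsum ((a + b) :: s).
Proof. by rewrite /=; ring. Qed.

Lemma rd_ehw y z d : rd y z d -> nonneg y -> ehw y -> ehw z.
Proof.
elim=> {y z d} [s|u w z d _ IH|u a b w z d _ IH|a mid l z d _ IH|a z d _ IH] // nn H;
  apply: IH.
- by move: nn; rewrite !nonneg_cat /nonneg /= => /andP[-> /and3P[_ _ ->]].
- move=> j hj ev; case: (ltnP j (size u)) => hju.
    have := H j; rewrite !take_cat hju; apply => //.
    by move: hj; rewrite !size_cat /=; lia.
  have := H j.+2; have h1 : (j.+2 < size u)%N = false by lia.
  have h2 : (j < size u)%N = false by lia.
  rewrite !take_cat h1 h2 /=.
  have -> : (j.+2 - size u = (j - size u).+2)%N by lia.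
  rewrite /= !altsum_cat altsum00; apply => //; last by rewrite /= !negbK.
  by move: hj; rewrite !size_cat /=; lia.
- move: nn; rewrite !nonneg_cat /nonneg /= => /andP[-> /and4P[a0 _ b0 ->]].
  by rewrite addr_ge0.
- move=> j hj ev; case: (ltnP j (size u)) => hju.
    have := H j; rewrite !take_cat hju; apply => //.
    by move: hj; rewrite !size_cat /=; lia.
  case E: (j - size u)%N => [|t].
    have := H j; have h2 : (j < size u)%N = false by lia.
    rewrite !take_cat h2 /= E /=; apply => //.
    by move: hj; rewrite !size_cat /=; lia.
  have := H j.+2; have h1 : (j.+2 < size u)%N = false by lia.
  have h2 : (j < size u)%N = false by lia.
  rewrite !take_cat h1 h2 /= E.
  have -> : (j.+2 - size u = t.+3)%N by lia.
  rewrite /= !altsum_cat -altsum_a0b; apply => //; last by rewrite /= !negbK.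
  by move: hj; rewrite !size_cat /=; lia.
- move: nn; rewrite /nonneg /= all_cat /= => /and3P[a0 -> /and3P[l0 _ _]].
  by rewrite addr_ge0.
- move: nn; rewrite /nonneg /= all_cat /= => /and3P[a0 _ /and3P[l0 _ _]].
  move=> [|t] hj ev; first by rewrite take0.
  have := H t.+1; rewrite /= takel_cat; last by move: hj => /=; lia.
  move=> h; have {h} h := h _ ev.
  have : 0 <= a - altsum (take t mid) by apply: h; rewrite size_cat /=; move: hj => /=; lia.
  by move=> h2; rewrite /= addrAC; apply: addr_ge0.
- by [].
- by move=> [|j].
Qed.

Lemma ehw_nil : ehw [::].
Proof. by move=> [|j]. Qed.

Lemma altsum_map_sub c s :
  altsum [seq a - c | a <- s] = altsum s - (if odd (size s) then c else 0).
Proof.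
elim: s => [|a s IH] /=; first by rewrite subr0.
by rewrite IH; case: (odd (size s)) => /=; ring.
Qed.

Lemma ehw_map_sub c s : ehw s -> ehw [seq a - c | a <- s].
Proof.
move=> H j; rewrite size_map => hj ev; rewrite -map_take altsum_map_sub size_take.
have -> : (if (j < size s)%N then j else size s) = j.
  by case: ifP => // /negbT; rewrite -leqNgt => h; apply/eqP; rewrite eqn_leq h hj.
by rewrite (negbTE ev) subr0; apply: H.
Qed.

Lemma altsum_take2 s : altsum (take 2 s) = nth 0 s 0 - nth 0 s 1.
Proof. by case: s => [|a [|b s]] /=; rewrite ?subr0 ?take0 /= ?subr0. Qed.

Lemma hw_sum (x : seq R) k : ~~ odd (size x) ->
  \sum_(1 <= i < k.+1) (ent x (2 * i).-1 - ent x (2 * i)) = altsum (take (2 * k) x).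
Proof.
move=> ev; elim: k => [|k IH]; first by rewrite big_geq // take0.
rewrite big_nat_recr // IH.
have -> : (2 * k.+1 = 2 * k + 2)%N by lia.
rewrite takeD altsum_cat altsum_take2 !nth_drop addn0 /ent.
have -> : ((2 * k + 2).-1.-1 = 2 * k)%N by lia.
have -> : ((2 * k + 2).-1 = 2 * k + 1)%N by lia.
case: (ltnP (2 * k) (size x)) => h.
  rewrite size_take h.
  by rewrite -signr_odd oddM /= expr0 mul1r.
have h' : (size x <= 2 * k + 1)%N by lia.
rewrite !nth_default //.
rewrite !subr0 mulr0 !addr0; exact: addr0.
Qed.

Lemma hw_ehw N (x : seq R) : size x = (2 * N)%N -> highest_weight N x -> ehw x.
Proof.
move=> sz hw j hj ev.
have ej : j = (2 * j./2)%N by rewrite -{1}(odd_double_half j) (negbTE ev) add0n -muln2 mulnC.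
case E: j./2 => [|k]; first by rewrite ej E take0.
rewrite ej E -hw_sum; last by rewrite sz oddM.
apply: hw; rewrite ltn0Sn /=; move: hj; rewrite sz ej E; lia.
Qed.

End Alt.

Section Chain.
Variable R : realFieldType.
Local Open Scope ring_scope.
Implicit Types (x y w u : seq R) (ps : seq (R * nat)).

Definition Fb ps : seq R := flatten [seq p.1 :: nseq p.2 0 | p <- ps].
Definition Rb ps : seq R := flatten [seq p.1 :: nseq (odd p.2) 0 | p <- ps].

Lemma blocks_cons (a : R) y : blocks (a :: y) =
  if a == 0 then ((blocks y).1.+1, (blocks y).2) else (0%N, (a, (blocks y).1) :: (blocks y).2).
Proof. by []. Qed.

Lemma blocks_dec y : y = nseq (blocks y).1 0 ++ Fb (blocks y).2.
Proof.
elim: y => [|a y IH] //; rewrite blocks_cons; case: eqP => [->|_] /=; first by rewrite {1}IH.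
by rewrite {1}IH.
Qed.

Lemma blocks_pos y : nonneg y -> all (fun p => 0 < p.1) (blocks y).2.
Proof.
elim: y => [|a y IH] // /andP[a0 ny]; rewrite blocks_cons; case: eqP => [_|na] /=; first exact: IH.
rewrite lt_def a0 andbT IH // andbT; exact/eqP.
Qed.

Lemma rdZ u (t : nat) w : rd (u ++ nseq (2 * t) 0 ++ w) (u ++ w) t.
Proof.
elim: t => [|t IH]; first by rewrite muln0 /=; exact: rd0.
rewrite mulnS /=; exact: rdL1.
Qed.

Lemma rdB u ps : rd (u ++ Fb ps) (u ++ Rb ps) (\sum_(p <- ps) p.2./2).
Proof.
elim: ps u => [|[a z] ps IH] u; first by rewrite big_nil; exact: rd0.
rewrite big_cons /=.
have -> : u ++ (a :: nseq z 0) ++ Fb ps =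
  (u ++ [:: a]) ++ nseq (2 * z./2) 0 ++ (nseq (odd z) 0 ++ Fb ps).
  have ez : nseq z (0:R) = nseq (2 * z./2) 0 ++ nseq (odd z) 0.
    by rewrite -nseqD -{1}(odd_double_half z) -muln2 mulnC addnC.
  by rewrite ez /= -!catA.
apply: rd_trans (rdZ _ _ _) _.
have -> : u ++ (a :: nseq (odd z) 0) ++ Rb ps = ((u ++ [:: a]) ++ nseq (odd z) 0) ++ Rb ps.
  by rewrite -!catA.
by rewrite catA; apply: IH.
Qed.

Lemma grp_cons_ex (a : R) z ps : exists g rest, grp ((a, z) :: ps) = g :: rest.
Proof. rewrite /=; case: (grp ps) => [|g r]; last case: ifP; by eauto. Qed.

Lemma grp_cons (a : R) z ps : grp ((a, z) :: ps) =
  match grp ps with g :: rest => if odd z then (a + g) :: rest else a :: g :: rest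
  | [::] => [:: a] end.
Proof. by []. Qed.

Lemma belast_cons2 (T : Type) (x y : T) s : belast x (y :: s) = x :: belast y s.
Proof. by []. Qed.

Lemma rdC u (p : R * nat) ps :
  rd (u ++ Rb (p :: ps)) (u ++ grp (p :: ps) ++ nseq (odd (last p ps).2) 0)
     (\sum_(q <- belast p ps) odd q.2).
Proof.
elim: ps u p => [|q ps IH] u [a z].
  by rewrite big_nil /Rb /= cats0; exact: rd0.
rewrite belast_cons2 big_cons [last _ _]/=.
have := IH (u ++ a :: nseq (odd z) 0) q.
have -> : u ++ Rb [:: (a, z), q & ps] = (u ++ a :: nseq (odd z) 0) ++ Rb (q :: ps).
  by rewrite -catA.
case: q => [b zb]; have [g [rest Eg]] := grp_cons_ex b zb ps; rewrite Eg => H.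
rewrite grp_cons Eg [(a, z).2]/=.
case: (odd z) H => H.
  rewrite addnC; apply: rd_trans H _; rewrite -catA /=.
  apply: rdL2; exact: rd0.
rewrite add0n -catA /=; by move: H; rewrite -!catA.
Qed.

Lemma altsum_nseq0 n : altsum (nseq n (0 : R)) = 0.
Proof. by elim: n => //= n ->; rewrite subr0. Qed.

Lemma nu_ofE y : nu_of y = (uphalf (blocks y).1 + \sum_(p <- (blocks y).2) uphalf p.2)%N.
Proof. by []. Qed.

Lemma rd_next y : nonneg y -> ehw y -> ~~ odd (size y) -> rd y (next_arr y) (nu_of y).
Proof.
move=> nn eh ev.
have dec := blocks_dec y; have pos := blocks_pos nn.
rewrite nu_ofE /next_arr.
move: dec pos; case: (blocks y) => z0 ps /= dec pos.
have ez : ~~ odd z0.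
  case: ps dec pos => [|[a zz] ps] dec pos.
    by move: ev; rewrite {1}dec cats0 size_nseq.
  apply/negP => oz; move: pos => /= /andP[a0 _].
  have hz : (z0.+1 < z0)%N = false by lia.
  have := eh z0.+1; rewrite dec take_cat size_nseq hz subSnn /=.
  rewrite altsum_cat altsum_nseq0 add0r /= take0 /= subr0 size_nseq -signr_odd oz expr1 mulN1r oppr_ge0.
  rewrite leNgt a0 /= => H; suff : false by []; apply: H => //.
  by rewrite size_cat size_nseq /=; lia.
have -> : uphalf z0 = z0./2 by rewrite uphalf_half (negbTE ez).
have e2 : z0 = (2 * z0./2)%N.
  by rewrite -{1}(odd_double_half z0) (negbTE ez) add0n -muln2 mulnC.
rewrite {1}dec {1}e2.
case: ps dec pos => [|p ps] dec pos.
  rewrite big_nil addn0 /=.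
  have := rdZ [::] z0./2 [::]; by rewrite /= cats0.
have := rdZ [::] z0./2 (Fb (p :: ps)); rewrite !cat0s => H1.
apply: rd_trans H1 _.
have := rdB [::] (p :: ps); rewrite !cat0s => H2.
have -> : (\sum_(q <- p :: ps) uphalf q.2 =
   \sum_(q <- p :: ps) q.2./2 + (\sum_(q <- belast p ps) odd q.2 + odd (last p ps).2))%N.
  rewrite (eq_bigr (fun q => odd q.2 + q.2./2)%N); last by move=> q _; rewrite uphalf_half.
  rewrite big_split /= addnC; congr (_ + _)%N.
  by rewrite lastI -cats1 big_cat big_seq1.
apply: rd_trans H2 _.
have := rdC [::] p ps; rewrite !cat0s => H3.
apply: rd_trans H3 _.
have -> : last (0, 0%N) (p :: ps) = last p ps by [].
case: p {dec pos} => [a z]; have [g [rest Eg]] := grp_cons_ex a z ps; rewrite Eg.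
case: (odd (last (a, z) ps).2) => /=.
- case/lastP: rest {Eg} => [|mid l] /=.
    by apply: rdE; exact: rd0.
  rewrite size_rcons /= -cats1 take_size_cat // last_cat /= -catA /=.
  apply: rdT; exact: rd0.
- by rewrite cats0; exact: rd0.
Qed.

Lemma grp_pos ps : all (fun p => 0 < p.1) ps -> all (fun a : R => 0 < a) (grp ps).
Proof.
elim: ps => [|[a z] ps IH] //= /andP[a0 /IH]; case: (grp ps) => [|g r] /=.
  by rewrite a0.
by case: ifP => _ /= /andP[g0 ->]; rewrite ?a0 ?g0 ?addr_gt0.
Qed.

Lemma next_pos y : nonneg y -> all (fun a : R => 0 < a) (next_arr y).
Proof.
move=> nn; have := grp_pos (blocks_pos nn); rewrite /next_arr.
case: (blocks y) => z0 [|[a z] ps] //.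
have [g [rest Eg]] := grp_cons_ex a z ps; rewrite Eg.
have -> : last (0, 0%N) ((a, z) :: ps) = last (a, z) ps by [].
case: (odd _) => //.
case/lastP: rest {Eg} => [|mid l] //.
rewrite /= size_rcons /= -cats1 take_size_cat // last_cat /= all_cat /=.
by move=> /and4P[g0 -> l0 _]; rewrite andbT addr_gt0.
Qed.

Lemma nu_pos y : nonneg y -> 0 \in y -> (0 < nu_of y)%N.
Proof.
move=> nn; rewrite {1}(blocks_dec y) nu_ofE mem_cat.
have pos := blocks_pos nn.
case: (blocks y) pos => z0 ps /= pos /orP[].
  by case: z0 => //= n _; rewrite uphalf_half; lia.
move=> H; suff : (0 < \sum_(p <- ps) uphalf p.2)%N by lia.
elim: ps pos H => [|[a z] ps IH] //= /andP[a0 pos]; rewrite big_cons /=.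
rewrite /Fb /= -/(Fb ps) inE mem_cat => /or3P[/eqP a00||].
- by move: a0; rewrite -a00 ltxx.
- by case: z => //= z _; rewrite uphalf_half; lia.
- by move/(IH pos); lia.
Qed.

End Chain.

Local Close Scope ring_scope.

Definition gap (i j : nat) : bool := (i.+1 < j)%N.

Lemma gap_trans : transitive gap.
Proof. rewrite /gap => j i k; lia. Qed.

Lemma mem_mask_iota m st n i : i \in mask m (iota st n) -> (st <= i < st + n)%N.
Proof. by move/mem_mask; rewrite mem_iota. Qed.

Lemma sorted_gap_mask m st :
  sorted gap (mask m (iota st (size m))) = sorted nadj m.
Proof.
elim: m st => [|b m IH] st //=; case: b => /=; last by rewrite IH sorted_path_false.
case: m IH => [|c m] IH //=.
rewrite (path_sortedE gap_trans); case: c IH => IH /=.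
  by rewrite /gap ltnn.
have -> : all (gap st) (mask m (iota st.+2 (size m))).
  apply/allP => i /mem_mask_iota; rewrite /gap; lia.
by have := IH st.+1.
Qed.

Lemma head_mask_iota m : (head 0 (mask m (iota 1 (size m))) == 1)%N = head false m.
Proof.
case: m => [|[] m] //=.
case E: (mask m (iota 2 (size m))) => [|x s] //=.
have : x \in mask m (iota 2 (size m)) by rewrite E mem_head.
move/mem_mask_iota => h; apply/negbTE; lia.
Qed.

Lemma last_mask_iota m : (0 < size m)%N ->
  (last 0 (mask m (iota 1 (size m))) == size m)%N = last false m.
Proof.
case/lastP: m => [|m b] //= _.
have e : size (rcons m b) = (size m + 1)%N by rewrite size_rcons addn1.
rewrite e iotaD -cats1 add1n mask_cat ?size_iota //.
case: b {e} => /=; first by rewrite !last_cat /= addn1 eqxx.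
rewrite cats0 !last_cat /=.
case E: (mask m (iota 1 (size m))) => [|x s] /=; first by rewrite addn1.
have : last x s \in mask m (iota 1 (size m)) by rewrite E mem_last.
move/mem_mask_iota => h; apply/negbTE; lia.
Qed.

Lemma admissible_mask N k m : size m = (2 * N)%N -> (0 < N)%N ->
  admissible N k (mask m (iota 1 (2 * N))) = (count id m == k) && cycle nadj m.
Proof.
move=> sz N0; rewrite /admissible size_mask ?size_iota //.
have -> : all (fun i => (1 <= i <= 2 * N)%N) (mask m (iota 1 (2 * N))).
  by apply/allP => i /mem_mask_iota; lia.
rewrite cycle_nadjE -sz sorted_gap_mask head_mask_iota last_mask_iota; last by lia.
by rewrite /=; case: (count id m == k).
Qed.

Lemma subseq_iota n st t : sorted ltn t -> all (fun i => st <= i < st + n)%N t ->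
  subseq t (iota st n).
Proof.
elim: n st t => [|n IH] st [|x t] //=.
  by move=> _ /andP[]; lia.
move=> st_t /andP[hx ht]; have := st_t; rewrite (path_sortedE ltn_trans) => /andP[ax st'].
case: eqP => [ex|nx].
  apply: IH => //; apply/allP => i it; move/allP: ax => /(_ i it); move/allP: ht => /(_ i it).
  lia.
apply: IH; first by [].
rewrite /= (_ : (st.+1 <= x < st.+1 + n)%N); last by move: hx nx; lia.
apply/allP => i it; move/allP: ax => /(_ i it); move/allP: ht => /(_ i it); move: hx nx; lia.
Qed.

Section TS.
Variable R : realFieldType.
Local Open Scope ring_scope.

Lemma tuple_sum_mask (A : seq R) m : size m = size A ->
  tuple_sum A (mask m (iota 1 (size A))) = wsum A m.
Proof.
move=> sz; rewrite /tuple_sum /wsum -(big_map (fun i => ent A i) xpredT id) map_mask.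
congr (\sum_(a <- mask m _) a).
rewrite -[iota 1 _]/(iota (1 + 0) _) iotaDl -map_comp.
rewrite (eq_map (g := nth 0 A)); first exact: mkseq_nth.
by move=> i /=; rewrite /ent.
Qed.

End TS.

Local Open Scope ring_scope.

Section Main.
Variable R : realFieldType.
Local Open Scope ring_scope.
Implicit Types (x y w u : seq R).

Lemma foldr_min_spec (h : R) (s : seq R) :
  [/\ foldr Order.min h s <= h, (forall a, a \in s -> foldr Order.min h s <= a) &
      (foldr Order.min h s == h) || (foldr Order.min h s \in s)].
Proof.
elim: s => [|a s [IH1 IH2 IH3]] /=; first by rewrite lexx eqxx.
split.
- by rewrite ge_min IH1 orbT.
- move=> b; rewrite inE => /orP[/eqP ->|bs]; first by rewrite ge_min lexx.
  by rewrite ge_min IH2 ?orbT.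
- rewrite minEle; case: ifP => _; first by rewrite inE eqxx orbT.
  by move: IH3 => /orP[->|h2] //; rewrite inE h2 !orbT.
Qed.

Lemma seqmin_spec x : x != [::] ->
  seqmin x \in x /\ (forall a, a \in x -> seqmin x <= a).
Proof.
case: x => [|h s] // _; rewrite /seqmin /=.
have [H1 H2 H3] := foldr_min_spec h s; split.
- rewrite inE minEle; case: ifP => _; first by rewrite eqxx.
  by move: H3 => /orP[->|->]; rewrite ?orbT.
- move=> b; rewrite inE => /orP[/eqP ->|bs]; first by rewrite ge_min lexx.
  by rewrite ge_min H2 ?orbT.
Qed.

Lemma ells_shift (acc : R) ps : ells acc ps = [seq acc + e | e <- ells 0 ps].
Proof.
elim: ps acc => [|[mu nu] ps IH] acc //=.
rewrite map_cat map_nseq IH (IH (0 + mu)) -map_comp add0r; congr (_ ++ _).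
by apply: eq_map => e /=; rewrite addrA.
Qed.

Lemma sum_map_add (mu : R) s : \sum_(a <- [seq b + mu | b <- s]) a = \sum_(a <- s) a + mu *+ size s.
Proof.
elim: s => [|a s IH] /=; first by rewrite !big_nil addr0.
by rewrite !big_cons IH mulrS; ring.
Qed.

Lemma isHm_shift (mu : R) y k v : 0 <= mu -> isHm y k v ->
  isHm [seq b + mu | b <- y] k (v + mu *+ k).
Proof.
move=> mu0 [[m [sz cy ct] ws] lb].
have E : forall m, size m = size y -> wsum [seq b + mu | b <- y] m = wsum y m + mu *+ count id m.
  by move=> m' sz'; rewrite /wsum -map_mask sum_map_add size_mask.
split.
  by exists m; [rewrite size_map | rewrite E // ws ct].
move=> m' sz' cy' ct'; rewrite size_map in sz'; rewrite E //.
apply: lerD; first exact: lb.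
by rewrite -(subnK ct') mulrnDr lerDr mulrn_wge0.
Qed.

Lemma sum_prefix (mu : R) nu L k : (k <= nu + size L)%N ->
  \sum_(0 <= i < k) nth 0 (nseq nu mu ++ [seq mu + e | e <- L]) i =
  mu *+ k + \sum_(0 <= i < k - nu) nth 0 L i.
Proof.
elim: k => [|k IH] hk; first by rewrite !big_geq // mulr0n add0r.
rewrite big_nat_recr //= IH; last by lia.
rewrite nth_cat size_nseq nth_nseq.
case: (ltnP k nu) => h.
  have -> : (k.+1 - nu = 0)%N by lia.
  have -> : (k - nu = 0)%N by lia.
  by rewrite mulrS; ring.
have hl : (k - nu < size L)%N by lia.
rewrite (nth_map 0 _ _ hl).
have -> : (k.+1 - nu = (k - nu).+1)%N by lia.
rewrite big_nat_recr //= mulrS; ring.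
Qed.

Lemma algoI_S f M x : algoI f.+1 M x =
  (seqmin x, nu_of [seq a - seqmin x | a <- x]) ::
  (if (M - nu_of [seq (a - seqmin x)%R | a <- x] == 0)%N then [::]
   else algoI f (M - nu_of [seq (a - seqmin x)%R | a <- x])%N
          (next_arr [seq a - seqmin x | a <- x])).
Proof. by rewrite /=; case: ifP. Qed.

Lemma main_ind fuel : forall n x, (n <= fuel)%N -> (0 < n)%N -> size x = (2 * n)%N ->
  all (fun a => 0 < a) x -> ehw x ->
  size (ells 0 (algoI fuel n x)) = n /\
  forall k, (k <= n)%N -> isHm x k (\sum_(0 <= j < k) nth 0 (ells 0 (algoI fuel n x)) j).
Proof.
elim: fuel => [|f IH] n x nf n0 sz px ex; first by lia.
rewrite algoI_S.
set mu := seqmin x; set y := [seq a - mu | a <- x]; set nu := nu_of y.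
have xn : x != [::] by apply/eqP => x0; move: sz; rewrite x0 /=; lia.
have [mux mul] := seqmin_spec xn; rewrite -/mu in mux mul.
have mu0 : 0 < mu by move/allP: px => /(_ _ mux).
have ny : nonneg y by apply/allP => b /mapP[a ax ->]; rewrite subr_ge0 mul.
have y0 : 0 \in y by apply/mapP; exists mu => //; rewrite subrr.
have evy : ~~ odd (size y) by rewrite size_map sz oddM.
have ey : ehw y by apply: ehw_map_sub.
have H := rd_next ny ey evy; rewrite -/nu in H.
have szr := rd_size H; rewrite size_map sz in szr.
have nu1 : (0 < nu)%N by apply: nu_pos.
have ex' : [seq b + mu | b <- y] = x.
  by rewrite -map_comp (eq_map (g := id)) ?map_id // => a /=; rewrite subrK.
have key : forall k v, isHm y k v -> isHm x k (v + mu *+ k).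
  by move=> k v h; rewrite -ex'; apply: isHm_shift => //; apply: ltW.
rewrite /ells -/(ells (0 + mu)) add0r.
case: eqP => [nun|nun].
  have nue : nu = n by lia.
  rewrite cats0 size_nseq; split => // k kn.
  have -> : \sum_(0 <= j < k) nth 0 (nseq nu mu) j = mu *+ k.
    have := @sum_prefix mu nu [::] k; rewrite cats0 /= => ->; last by lia.
    by rewrite big_geq ?addr0 //; lia.
  rewrite -[mu *+ k]add0r; apply: key; apply: rd_prefix H ny _ _; lia.
set n' := (n - nu)%N.
set x' := next_arr y.
have := IH n' x'; rewrite -/n'.
case.
- lia.
- lia.
- move: szr; rewrite /n' /x' -muln2; lia.
- exact: next_pos.
- exact: rd_ehw H ny ey.
move=> hsz hk; rewrite ells_shift.
split; first by rewrite size_cat size_nseq size_map hsz /n'; lia.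
move=> k kn; rewrite sum_prefix; last by rewrite hsz /n'; lia.
case: (leqP k nu) => knu.
  have -> : (k - nu = 0)%N by lia.
  rewrite big_geq // addr0 -[mu *+ k]add0r; apply: key; exact: rd_prefix H ny _ knu.
have := hk (k - nu)%N; rewrite /n' => h.
have := rd_transfer H ny (h ltac:(lia)); rewrite subnK; last by lia.
by move/key; rewrite addrC.
Qed.

End Main.

Unset Implicit Arguments. Set Strict Implicit. Set Printing Implicit Defensive.

Theorem mainTheorem7 (R : realFieldType) (N : nat) (A : seq R)
  (hN : (1 <= N)%N)
  (hsize : size A = (2 * N)%N)
  (hpos : forall i, (1 <= i <= 2 * N)%N -> 0 < ent A i)
  (hsum : \sum_(1 <= l < N.+1) ent A (2 * l) < \sum_(1 <= l < N.+1) ent A (2 * l).-1)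
  (hhw : highest_weight N A) :
  size (ell_list N A) = N /\
  forall k, (1 <= k <= N)%N ->
    (exists2 t, admissible N k t &
       \sum_(0 <= j < k) nth 0 (ell_list N A) j = tuple_sum A t) /\
    (forall t, admissible N k t ->
       \sum_(0 <= j < k) nth 0 (ell_list N A) j <= tuple_sum A t).
Proof.
have px : all (fun a => 0 < a) A.
  apply/allP => a /(nthP 0) [i hi <-]; have := hpos i.+1; rewrite /ent /=; apply.
  by move: hi; rewrite hsize; lia.
have [hsz hk] := main_ind (leqnn N) hN hsize px (hw_ehw hsize hhw).
rewrite /ell_list; split => // k /andP[k1 kN].
have [[m [sm cm ctm] wm] lb] := hk k kN.
split.
  exists (mask m (iota 1 (2 * N))).
    rewrite admissible_mask ?ctm ?eqxx ?cm //; by rewrite sm hsize.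
  by rewrite -hsize tuple_sum_mask.
move=> t adt.
have := adt; rewrite /admissible => /and4P[_ ar srt _].
have : subseq t (iota 1 (2 * N)).
  apply: subseq_iota.
    by apply: sub_sorted srt => i j; rewrite /gap; lia.
  by apply/allP => i /(allP ar); lia.
case/subseqP => m' sm' et; rewrite size_iota in sm'.
move: adt; rewrite et admissible_mask // => /andP[/eqP cm' cy'].
rewrite -hsize tuple_sum_mask ?hsize //.
by apply: lb => //; rewrite ?hsize ?cm'.
Qed.
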